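(* Let $m>4$ and let $\lambda=(\boldsymbol\lambda_1,\ldots,\boldsymbol\lambda_m)$ be a characteristic matrix on the convex $m$-gon with edges $F_1,\ldots,F_m$ numbered cyclically. Then $\lambda$ decomposes as a connected sum of characteristic matrices on two convex polygons; that is, there exist $1\le i<j\le m$ with $F_i\cap F_j=\emptyset$ and $\det(\boldsymbol\lambda_i,\boldsymbol\lambda_j)=\pm1$, so that $(\boldsymbol\lambda_i,\boldsymbol\lambda_{i+1},\ldots,\boldsymbol\lambda_j)$ is a characteristic matrix on the convex $(j-i+1)$-gon, $(\boldsymbol\lambda_j,\ldots,\boldsymbol\lambda_m,\boldsymbol\lambda_1,\ldots,\boldsymbol\lambda_i)$ is a characteristic matrix on the convex $(m-j+i+1)$-gon, and $\lambda$ is their connected sum.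
   Context: The edges (facets) $F_1,\ldots,F_m$ of the convex $m$-gon are numbered clockwise, so $F_i\cap F_{i+1}\neq\emptyset$ (indices mod $m$) and these are the only intersecting pairs of distinct edges. A characteristic matrix on the convex $m$-gon is an integer $2\times m$ matrix $(\boldsymbol\lambda_1,\ldots,\boldsymbol\lambda_m)$ with $\det(\boldsymbol\lambda_i,\boldsymbol\lambda_{i+1})=\pm1$ for all $i$ (indices mod $m$). Connected sum of characteristic matrices: the polygon is cut along a diagonal joining the vertices... more precisely, the $m$-gon is the connected sum of the two smaller polygons glued along the two common edges $F_i,F_j$, and the characteristic matrix of the connected sum agrees with each summand on the corresponding edges; the associated quasitoric manifold is then the connected sum of the two associated quasitoric manifolds. *)

(* Defs.v *)
From mathcomp Require Import all_boot all_order all_algebra.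
Set Implicit Arguments. Unset Strict Implicit. Unset Printing Implicit Defensive.
Import Order.TTheory GRing.Theory Num.Theory.
Local Open Scope ring_scope.

Definition det2 (a b : int * int) : int := a.1 * b.2 - a.2 * b.1.

(* A characteristic matrix on the convex (size s)-gon: the columns are listed
   cyclically (0-indexed), and consecutive columns (indices mod size s) have
   determinant +-1. *)
Definition char_matrix (s : seq (int * int)) : Prop :=
  forall k : nat, (k < size s)%N ->
    `|det2 (nth (0, 0) s k) (nth (0, 0) s ((k.+1) %% size s))| = 1.

(* Edges F_i and F_j (0-indexed, i < j < m) of the convex m-gon are disjoint
   iff they are not cyclically adjacent. *)
Definition edges_disjoint (m i j : nat) : Prop :=
  j <> i.+1 /\ ~ (i = 0%N /\ j = m.-1).

(* Main.v *)
Require Import Defs.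
From mathcomp Require Import all_boot all_order all_algebra zify ring.
Import Order.TTheory GRing.Theory Num.Theory.
Local Open Scope ring_scope.

Definition Nv (v : int * int) : int := v.1 * v.1 + v.2 * v.2.

Lemma core (p q r : int * int) : `|det2 p q| = 1 -> `|det2 q r| = 1 ->
  Nv p <= Nv q -> Nv r <= Nv q -> `|det2 p r| <= 1.
Proof.
case: p => a b; case: q => c d; case: r => e f; rewrite /det2 /Nv /=.
move=> h1 h2 h3 h4.
set d1 := a*d - b*c in h1. set d2 := c*f-d*e in h2. set d3 := a*f-b*e.
have E : d3*d3*(c*c+d*d) = d2*d2*(a*a+b*b) + d1*d1*(e*e+f*f) + 2*d1*d2*(a*e+b*f).
  rewrite /d1 /d2 /d3. ring.
have L : (a*e+b*f)*(a*e+b*f) + d3*d3 = (a*a+b*b)*(e*e+f*f). rewrite /d3; ring.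
have s1 : d1*d1 = 1 by lia.
have s2 : d2*d2 = 1 by lia.
rewrite s1 s2 !mul1r in E.
move: E L. clearbody d1 d2 d3.
set Np := a*a+b*b in h3 *. set Nq := c*c+d*d in h3 h4 *. set Nr := e*e+f*f in h4 *.
set P := a*e+b*f.
have hq : 0 <= Nq by rewrite /Nq; nia.
have hp : 0 <= Np by rewrite /Np; nia.
have hr : 0 <= Nr by rewrite /Nr; nia.
clearbody Np Nq Nr P => E L.
case: (lerP `|d3| 1) => // H.
have H4 : 4 <= d3*d3 by nia.
have HQ : Nq <= d1*d2*P by nia.
have HP : Nq*Nq <= P*P by nia.
nia.
Qed.

Lemma core0 (p q r s : int * int) : `|det2 p q| = 1 -> `|det2 q r| = 1 ->
  det2 p r = 0 -> `|det2 p s| = `|det2 r s|.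
Proof.
case: p => a b; case: q => c d; case: r => e f; case: s => g h; rewrite /det2 /=.
move=> h1 h2 h3.
set d1 := a*d - b*c in h1. set d2 := c*f-d*e in h2.
have E1 : (a*f-b*e)*c = d2*a + d1*e by rewrite /d1 /d2; ring.
have E2 : (a*f-b*e)*d = d2*b + d1*f by rewrite /d1 /d2; ring.
rewrite h3 mul0r in E1 E2.
have s1 : d1*d1 = 1 by lia.
have s2 : d2*d2 = 1 by lia.
have E : d2 * (a*h - b*g) = - d1 * (e*h - f*g).
  have -> : d2 * (a*h - b*g) = (d2*a)*h - (d2*b)*g by ring.
  have -> : d2*a = - (d1*e) by lia.
  have -> : d2*b = - (d1*f) by lia.
  ring.
have : `|d2 * (a*h - b*g)| = `|- d1 * (e*h - f*g)| by rewrite E.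
rewrite !normrM normrN; lia.
Qed.

Lemma detC a b : `|det2 a b| = `|det2 b a|.
Proof. by rewrite /det2 -normrN opprB [a.1 * _]mulrC [a.2 * _]mulrC. Qed.

Lemma cm_of (s : seq (int * int)) n : size s = n -> (0 < n)%N ->
  (forall k, (k.+1 < n)%N -> `|det2 (nth (0,0) s k) (nth (0,0) s k.+1)| = 1) ->
  `|det2 (nth (0,0) s n.-1) (nth (0,0) s 0)| = 1 -> char_matrix s.
Proof.
move=> hs hn h1 h2 k hk; rewrite hs in hk *.
case: (ltnP k.+1 n) => hk1.
  by rewrite modn_small // h1.
have ek : k = n.-1 by lia.
by rewrite ek prednK // modnn h2.
Qed.
Lemma pair_ok m (lam : seq (int * int)) i j : size lam = m -> char_matrix lam ->
  (i < j < m)%N -> (i.+1 < j)%N ->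
  `|det2 (nth (0, 0) lam i) (nth (0, 0) lam j)| = 1 ->
  char_matrix (drop i (take j.+1 lam)) /\
  char_matrix (drop j lam ++ take i.+1 lam).
Proof.
move=> hs H /andP[hij hjm] hij2 hd.
have Hc : forall k, (k.+1 < m)%N ->
    `|det2 (nth (0,0) lam k) (nth (0,0) lam k.+1)| = 1.
  move=> k hk; have := H k; rewrite hs modn_small //; apply; lia.
split.
  have nt : forall k, (k < j.+1 - i)%N -> nth (0,0) (drop i (take j.+1 lam)) k = nth (0,0) lam (i+k).
    move=> k hk; rewrite nth_drop nth_take //. lia.
  apply: (@cm_of _ (j.+1 - i)).
  - rewrite size_drop size_takel; lia.
  - lia.
  - move=> k hk; rewrite !nt; try lia. rewrite addnS; apply: Hc; lia.
  - rewrite !nt; try lia. rewrite addn0 detC.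
    have -> : (i + (j.+1 - i).-1 = j)%N by lia.
    done.
have sd : size (drop j lam) = (m - j)%N by rewrite size_drop hs.
have nt1 : forall k, (k < m - j)%N -> nth (0,0) (drop j lam ++ take i.+1 lam) k = nth (0,0) lam (j+k).
  by move=> k hk; rewrite nth_cat sd hk nth_drop.
have nt2 : forall k, (m - j <= k)%N -> (k <= m - j + i)%N ->
   nth (0,0) (drop j lam ++ take i.+1 lam) k = nth (0,0) lam (k - (m - j)).
  move=> k hk1 hk2; rewrite nth_cat sd ltnNge hk1 /= nth_take //; lia.
apply: (@cm_of _ ((m - j) + i.+1)).
- by rewrite size_cat sd size_takel; lia.
- lia.
- move=> k hk.
  case: (ltnP k.+1 (m - j)) => h1.
    rewrite !nt1; try lia. rewrite addnS; apply: Hc; lia.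
  case: (ltnP k (m - j)) => h2.
    have ek : k.+1 = (m - j)%N by lia.
    rewrite nt1 // ek nt2; try lia. rewrite subnn.
    have ek2 : (j + k = m.-1)%N by lia.
    rewrite ek2. have := H m.-1; rewrite hs prednK ?modnn //; [apply|]; lia.
  rewrite !nt2; try lia. have -> : (k.+1 - (m - j) = (k - (m - j)).+1)%N by lia.
  apply: Hc; lia.
- rewrite nt2; try lia. rewrite nt1; try lia.
  have -> : ((m - j + i.+1).-1 - (m - j) = i)%N by lia.
  by rewrite addn0.
Qed.
Lemma exists_max (f : nat -> int) n : (0 < n)%N ->
  exists i, (i < n)%N /\ forall j, (j < n)%N -> f j <= f i.
Proof.
elim: n => // -[|n] IH _.
  by exists 0%N; split => // j; rewrite ltnS leqn0 => /eqP ->.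
have [i [hi hm]] := IH isT.
case: (lerP (f n.+1) (f i)) => hc.
  exists i; split; first lia.
  move=> j hj; case: (ltnP j n.+1) => hj2; first exact: hm.
  have -> : j = n.+1 by lia. done.
exists n.+1; split => // j hj.
case: (ltnP j n.+1) => hj2.
  exact: le_trans (hm _ hj2) (ltW hc).
have -> : j = n.+1 by lia. done.
Qed.

Theorem lemma4p5 (m : nat) (lam : seq (int * int)) :
  (4 < m)%N -> size lam = m -> char_matrix lam ->
  exists i j : nat,
    [/\ (i < j < m)%N, edges_disjoint m i j,
        `|det2 (nth (0, 0) lam i) (nth (0, 0) lam j)| = 1,
        char_matrix (drop i (take j.+1 lam)) &
        char_matrix (drop j lam ++ take i.+1 lam)].
Proof.
move=> hm hs H.
have m0 : (0 < m)%N by lia.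
pose L k := nth (0,0) lam (k %% m)%N.
have Hc : forall k, `|det2 (L k) (L k.+1)| = 1.
  move=> k; have := H (k %% m)%N; rewrite hs ltn_pmod // => /(_ isT).
  by rewrite -addn1 modnDml addn1.
have pick : forall a d, (2 <= d)%N -> (d <= m - 2)%N ->
    `|det2 (L a) (L (a + d)%N)| = 1 ->
    exists i j : nat,
    [/\ (i < j < m)%N, edges_disjoint m i j,
        `|det2 (nth (0, 0) lam i) (nth (0, 0) lam j)| = 1,
        char_matrix (drop i (take j.+1 lam)) &
        char_matrix (drop j lam ++ take i.+1 lam)].
  move=> a d hd1 hd2; rewrite /L -modnDml.
  have hx : (a %% m < m)%N by rewrite ltn_pmod.
  move: hx; set x := (a %% m)%N => hx.
  case: (ltnP (x + d) m) => hxd.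
    rewrite (modn_small hxd) => hdet.
    have [h1 h2] := @pair_ok m lam x (x+d) hs H ltac:(lia) ltac:(lia) hdet.
    exists x, (x + d)%N; split => //; first lia.
    rewrite /edges_disjoint; lia.
  have -> : (x + d = (x + d - m) + m)%N by lia.
  rewrite modnDr modn_small; last lia.
  rewrite detC => hdet.
  have [h1 h2] := @pair_ok m lam (x + d - m) x hs H ltac:(lia) ltac:(lia) hdet.
  exists (x + d - m)%N, x; split => //; first lia.
  rewrite /edges_disjoint; lia.
have [i [hi hmax]] := @exists_max (fun k => Nv (nth (0,0) lam k)) m m0.
pose a := (i + m.-1)%N.
have La1 : L a.+1 = nth (0,0) lam i.
  by rewrite /L /a -addnS prednK // modnDr modn_small.
have HN : forall k, Nv (L k) <= Nv (L a.+1).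
  move=> k; rewrite La1; apply: hmax; exact: ltn_pmod.
have := @core _ _ _ (Hc a) (Hc a.+1) (HN a) (HN a.+2).
case: (eqVneq (det2 (L a) (L a.+2)) 0) => h0 hle.
  have := @core0 _ _ _ (L a.+3) (Hc a) (Hc a.+1) h0.
  rewrite Hc => h3.
  apply: (pick a 3%N) => //; first lia.
  by have -> : (a + 3 = a.+3)%N by lia.
apply: (pick a 2%N) => //; first lia.
have -> : (a + 2 = a.+2)%N by lia.
lia.
Qed.
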